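(* Let $\rho$ be a congruence on $\mathcal{OR}_n$ with $\rho(0)=\mathcal I_k$ for some $k\in\{0,1,\dots,m-1\}$, and let $\sigma\in\mathcal{OR}_n$ with $\mathrm{rk}(\sigma)>k+1$. Then for every $\tau\in\mathcal{OR}_n$, $\tau\,\rho\,\sigma$ if and only if $\tau=\sigma$.
   Context: Let $m\ge 1$, $n=2m$, $\mathbf n=\{1,\dots,n\}$, $\theta(i)=n+1-i$, written $\bar i$. A proper subset $I\subset\mathbf n$ is admissible if $I\cap\theta(I)=\emptyset$; $\mathbf n$ and $\emptyset$ are also admissible. For an injective partial map $\sigma$ of $\mathbf n$, $I(\sigma)$ is its domain, $J(\sigma)$ its image, $\mathrm{rk}(\sigma)=|I(\sigma)|$; products are compositions of partial maps. $W=\{\sigma\in S_n:\sigma(\bar i)=\overline{\sigma(i)}\ \forall i\}$, $W'=\{\sigma\in W:|\sigma(\{1,\dots,m\})\cap\{m+1,\dots,n\}|\text{ even}\}$. An admissible $m$-subset is of type I if it contains an even number of elements $>m$, type II otherwise. $\mathcal{OR}_n$ consists of the injective partial maps $\sigma$ with: $\mathrm{rk}(\sigma)<m$ and $I(\sigma),J(\sigma)$ admissible; or $\mathrm{rk}(\sigma)=m$ and $I(\sigma),J(\sigma)$ admissible of the same type; or $\sigma\in W'$. $\mathcal I_k=\{\sigma\in\mathcal{OR}_n:\mathrm{rk}(\sigma)\le k\}$. $0$ is the empty map and $\rho(0)$ its $\rho$-class. *)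

(* Defs.v *)
From mathcomp Require Import all_boot.
Set Implicit Arguments. Unset Strict Implicit. Unset Printing Implicit Defensive.

(* Points of n = 2m are encoded 0-based as 'I_(m.*2): the paper's point i
   corresponds to the ordinal i-1.  theta(i) = n+1-i becomes rev_ord. *)
Definition pt (m : nat) := 'I_(m.*2).
Definition theta (m : nat) (i : pt m) : pt m := rev_ord i.

Definition pimap (m : nat) := {ffun pt m -> option (pt m)}.

Definition dom (m : nat) (s : pimap m) : {set pt m} := [set i | s i != None].
Definition img (m : nat) (s : pimap m) : {set pt m} :=
  [set j | [exists i, s i == Some j]].
Definition rk (m : nat) (s : pimap m) : nat := #|dom s|.

Definition pinjective (m : nat) (s : pimap m) : Prop :=
  forall i j y, s i = Some y -> s j = Some y -> i = j.

Definition pmul (m : nat) (s t : pimap m) : pimap m :=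
  [ffun x => if s x is Some y then t y else None].

Definition pzero (m : nat) : pimap m := [ffun => None].

Definition admissible (m : nat) (I : {set pt m}) : bool :=
  (I == setT) || [disjoint I & (@theta m) @: I].

(* an admissible m-subset is of type I iff it has an even number of elements
   > m (0-based: >= m) *)
Definition typeI (m : nat) (I : {set pt m}) : bool :=
  ~~ odd #|[set i in I | m <= val i]|.

(* W' as total injective maps commuting with theta and mapping an even number
   of elements of {1..m} into {m+1..n} *)
Definition inW' (m : nat) (s : pimap m) : Prop :=
  pinjective s /\ (forall i, s i != None) /\
  (forall i y, s i = Some y -> s (theta i) = Some (theta y)) /\
  ~~ odd #|[set y : pt m | (m <= val y) &&
             [exists i : pt m, (val i < m) && (s i == Some y)]]|.

Definition inOR (m : nat) (s : pimap m) : Prop :=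
  pinjective s /\
  [\/ (rk s < m /\ admissible (dom s) /\ admissible (img s)),
      (rk s = m /\ admissible (dom s) /\ admissible (img s) /\
         typeI (dom s) = typeI (img s))
    | inW' s].

Definition congruence (m : nat) (rho : pimap m -> pimap m -> Prop) : Prop :=
  [/\ (forall a b, rho a b -> inOR a /\ inOR b),
      (forall a, inOR a -> rho a a),
      (forall a b, rho a b -> rho b a),
      (forall a b c, rho a b -> rho b c -> rho a c)
    & (forall a b c, inOR c -> rho a b ->
         rho (pmul c a) (pmul c b) /\ rho (pmul a c) (pmul b c))].

(* Main.v *)
Require Import Defs.
From mathcomp Require Import all_boot zify.
Set Implicit Arguments. Unset Strict Implicit. Unset Printing Implicit Defensive.

Lemma subset_size (T : finType) (S : {set T}) x j :
  x \in S -> 0 < j -> j <= #|S| -> exists A : {set T}, [/\ A \subset S, x \in A & #|A| = j].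
Proof.
move=> xS j0 jS.
have : j.-1 <= #|S :\ x| by rewrite (cardsD1 x S) xS in jS; lia.
case/card_geqP=> s [us ss sub].
exists (x |: [set y in s]); split.
- apply/subsetP=> y; rewrite !inE => /orP[/eqP->//|/sub]; by rewrite !inE => /andP[].
- by rewrite !inE eqxx.
- rewrite cardsU1 !inE.
  have -> : (x \in s) = false by apply/negP=> /sub; rewrite !inE eqxx.
  move/card_uniqP: us; rewrite cardsE => ->; rewrite ss /=; lia.
Qed.

Lemma theta_inv m (i : pt m) : theta (theta i) = i.
Proof. exact: rev_ordK. Qed.

Lemma theta_neq m (i : pt m) : theta i != i.
Proof.
apply/eqP=> /(congr1 val) /=. have := ltn_ord i. move: (val i) => a. rewrite -addnn. lia.
Qed.

Lemma theta_inj m : injective (@theta m).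
Proof. exact: (can_inj (@theta_inv m)). Qed.

Definition P m (x z : pt m) (i : pt m) : bool :=
  if (i == x) || (theta i == x) then i == x
  else if (i == z) || (theta i == z) then i != z else val i < m.

Lemma thval m (i : pt m) : val (theta i) = m.*2 - i.+1.
Proof. by []. Qed.

Lemma P_ab m (x z : pt m) i : (P x z i (+) P x z (theta i)) = true.
Proof.
rewrite /P theta_inv.
case: (eqVneq i x) => [->|nx]; first by rewrite ?eqxx orbT (negbTE (theta_neq x)).
rewrite ?(negbTE nx) /=. case: (eqVneq (theta i) x) => [ex|nex]; first by rewrite ex ?eqxx.
rewrite ?(negbTE nex) /=.
case: (eqVneq i z) => [->|nz]; first by rewrite ?eqxx orbT (negbTE (theta_neq z)).
rewrite ?(negbTE nz) /=. case: (eqVneq (theta i) z) => [ez|nez]; first by [].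
rewrite /=. have hi := ltn_ord i. move: (val i) hi => a. rewrite -addnn.
case: (ltnP a m); case: (ltnP (m + m - a.+1) m); lia.
Qed.

Lemma trans_exists m (x z : pt m) : z != x ->
  exists T : {set pt m}, [/\ x \in T, z \notin T, #|T| = m & [disjoint T & (@theta m) @: T]].
Proof.
move=> zx. exists [set i | P x z i].
have D : [disjoint [set i | P x z i] & (@theta m) @: [set i | P x z i]].
  rewrite -setI_eq0; apply/eqP/setP => i; rewrite !inE; apply/negbTE/andP => [[Pi /imsetP [j]]].
  rewrite inE => Pj ei; have := P_ab x z j; by rewrite -ei Pi Pj.
split => //.
- by rewrite inE /P eqxx.
- rewrite inE /P (negbTE zx) /=. case: (eqVneq (theta z) x) => // _. by rewrite eqxx.
- have U : [set i | P x z i] :|: (@theta m) @: [set i | P x z i] = setT.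
    apply/setP=> i; rewrite !inE. case Pi: (P x z i) => //=.
    apply/imsetP; exists (theta i); last by rewrite theta_inv.
    have := P_ab x z i; by rewrite inE Pi.
  have := cardsUI [set i | P x z i] ((@theta m) @: [set i | P x z i]).
  rewrite U (disjoint_setI0 D) cards0 card_imset; last exact: theta_inj.
  have -> : #|[set: pt m]| = m.*2 by rewrite cardsT card_ord.
  set c := #|[set i | P x z i]|. move=> h; have e := addnn m; lia.
Qed.

Lemma pickA m k (D : {set pt m}) x z : admissible D -> x \in D -> z != x ->
  k.+1 <= #|D :\ z| -> k.+1 <= m ->
  exists A : {set pt m}, [/\ A \subset D, z \notin A, x \in A, #|A| = k.+1 &
    [disjoint A & (@theta m) @: A]].
Proof.
move=> adm xD zx hk hkm.
have [S [SD xS kS dS]] : exists S : {set pt m}, [/\ S \subset D :\ z, x \in S, k.+1 <= #|S|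
   & [disjoint S & (@theta m) @: S]].
  case/orP: adm => [/eqP DT|dD].
    have [T [xT zT cT dT]] := trans_exists zx.
    exists T; split => //; last by rewrite cT.
    apply/subsetP=> i iT; rewrite !inE DT in_setT andbT. by apply: contraNneq zT => <-.
  exists (D :\ z); split => //; first by rewrite !inE xD eq_sym zx.
  apply: (disjointW (subsetDl D [set z]) (imsetS _ (subsetDl D [set z])) dD).
have [A [AS xA cA]] := subset_size xS (ltn0Sn k) kS.
exists A; split => //.
- apply: (subset_trans AS); apply: (subset_trans SD); exact: subsetDl.
- apply/negP=> /(subsetP AS) /(subsetP SD); by rewrite !inE eqxx.
- exact: (disjointW AS (imsetS _ AS) dS).
Qed.

Definition pid m (A : {set pt m}) : pimap m := [ffun i => if i \in A then Some i else None].

Lemma dom_pid m (A : {set pt m}) : dom (pid A) = A.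
Proof. apply/setP=> i; rewrite !inE ffunE; by case: (i \in A). Qed.

Lemma img_pid m (A : {set pt m}) : img (pid A) = A.
Proof.
apply/setP=> j; rewrite !inE; apply/existsP/idP => [[i]|jA]; last by exists j; rewrite ffunE jA.
rewrite ffunE; case: ifP => // iA /eqP [<-] //.
Qed.

Lemma pid_OR m (A : {set pt m}) : [disjoint A & (@theta m) @: A] -> #|A| <= m -> inOR (pid A).
Proof.
move=> dA cA; split.
  by move=> i j y; rewrite !ffunE; case: ifP => // _ [<-]; case: ifP => // _ [<-].
have adm : admissible A by rewrite /admissible dA orbT.
rewrite /rk dom_pid img_pid. move: cA; rewrite leq_eqVlt => /orP[/eqP e|l].
  by apply: Or32; split.
by apply: Or31.
Qed.

Definition gf m (u : pimap m) (i : pt m) : pt m := odflt i (u i).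

Lemma card_img m (u : pimap m) : pinjective u -> #|img u| = rk u.
Proof.
move=> inj.
have -> : img u = (gf u) @: dom u.
  apply/setP=> j; rewrite inE; apply/existsP/imsetP => [[i /eqP ui]|[i]].
    by exists i; rewrite /gf ?inE ui.
  rewrite inE /gf; case ui: (u i) => [a|] //= _ ->; by exists i; rewrite ui.
apply: card_in_imset => i j; rewrite !inE /gf.
case ui: (u i) => [a|] //; case uj: (u j) => [b|] //= _ _ e.
by apply: (inj _ _ a); rewrite ?ui ?uj ?e.
Qed.

Lemma OR_adm m (u : pimap m) : inOR u -> admissible (dom u) /\ admissible (img u).
Proof.
case=> inj [[_ [a b]]|[_ [a [b _]]]|[_ [tot _]]] //.
have dT : dom u = setT by apply/setP=> i; rewrite !inE tot.
have iT : img u = setT.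
  apply/eqP; rewrite eqEcard subsetT /= card_img // /rk dT //.
by rewrite /admissible dT iT eqxx.
Qed.

Lemma dom_pmul_l m (A : {set pt m}) w : dom (pmul (pid A) w) = A :&: dom w.
Proof. apply/setP=> i; rewrite !inE !ffunE; by case: (i \in A). Qed.

Section L.
Variables (m : nat) (rho : pimap m -> pimap m -> Prop) (k : nat).
Hypothesis hrho : congruence rho.
Hypothesis h0 : forall t, rho t (@pzero m) <-> (inOR t /\ rk t <= k).
Hypothesis hkm : k.+1 <= m.

Lemma L1 u v x z : inOR u -> rho u v -> x \in dom u -> x \notin dom v -> z != x ->
  k.+1 <= #|dom u :\ z| -> False.
Proof.
case: hrho => hOR hrefl hsym htr hcomp hu ruv xu xv zx hk.
have [A [Ad zA xA cA dA]] := pickA (proj1 (OR_adm hu)) xu zx hk hkm.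
have eA : inOR (pid A) by apply: pid_OR dA _; rewrite cA.
have [r1 _] := hcomp _ _ _ eA ruv.
have [_ orv] := hOR _ _ r1.
have rv0 : rho (pmul (pid A) v) (@pzero m).
  apply/h0; split => //. rewrite /rk dom_pmul_l.
  have : #|A :\ x| = k by move: cA; rewrite (cardsD1 x A) xA; lia.
  move=> <-; apply: subset_leq_card; apply/subsetP=> i; rewrite !inE => /andP[iA iv].
  rewrite iA andbT; by apply: contraNneq xv => <-; rewrite inE.
have := htr _ _ _ r1 rv0 => /h0 [_]. rewrite /rk dom_pmul_l (setIidPl Ad) cA. lia.
Qed.

Lemma L2 u v y z : inOR u -> rho u v -> y \in img u -> y \notin img v -> z != y ->
  k.+1 <= #|img u :\ z| -> False.
Proof.
case: hrho => hOR hrefl hsym htr hcomp hu ruv yu yv zy hk.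
have [_ ov] := hOR _ _ ruv.
have [B [Bd zB yB cB dB]] := pickA (proj2 (OR_adm hu)) yu zy hk hkm.
have eB : inOR (pid B) by apply: pid_OR dB _; rewrite cB.
have [_ r1] := hcomp _ _ _ eB ruv.
have [_ orv] := hOR _ _ r1.
have rv0 : rho (pmul v (pid B)) (@pzero m).
  apply/h0; split => //.
  have : #|B :\ y| = k by move: cB; rewrite (cardsD1 y B) yB; lia.
  move=> <-. rewrite /rk.
  have <- : #|gf v @: dom (pmul v (pid B))| = #|dom (pmul v (pid B))|.
    apply: card_in_imset.
    move=> i j; rewrite !inE !ffunE /gf.
    case vi: (v i) => [a|] //; case vj: (v j) => [b|] //= _ _ e.
    by apply: (proj1 ov _ _ a); rewrite ?vi ?vj ?e.
  apply: subset_leq_card; apply/subsetP=> j /imsetP [i]; rewrite !inE !ffunE /gf.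
  case vi: (v i) => [a|] //=; rewrite ffunE; case: ifP => // aB _ ->; rewrite aB andbT.
  apply: contraNneq yv => <-; rewrite inE; apply/existsP; exists i; by rewrite vi.
have := htr _ _ _ r1 rv0 => /h0 [_]. rewrite /rk.
have : #|B| <= #|(gf u) @: dom (pmul u (pid B))|.
  apply: subset_leq_card; apply/subsetP=> b bB.
  have := subsetP Bd _ bB; rewrite inE => /existsP [i /eqP ui].
  apply/imsetP; exists i; last by rewrite /gf ui.
  by rewrite !inE !ffunE ui ffunE bB.
have := leq_imset_card (gf u) (dom (pmul u (pid B))). move=> h1 h2 h3; have := leq_trans (leq_trans h2 h1) h3; by rewrite cB ltnn.
Qed.
End L.

Lemma cardD1_ge (T : finType) (S : {set T}) z n : n.+1 <= #|S| -> n <= #|S :\ z|.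
Proof. rewrite (cardsD1 z S); case: (z \in S) => /=; lia. Qed.

Theorem lemma4p9 (m : nat) (hm : 1 <= m) (rho : pimap m -> pimap m -> Prop)
  (hrho : congruence rho) (k : nat) (hk : k <= m - 1)
  (h0 : forall t, rho t (@pzero m) <-> (inOR t /\ rk t <= k))
  (s : pimap m) (hs : inOR s) (hrk : k + 1 < rk s) :
  forall t, inOR t -> (rho t s <-> t = s).
Proof.
have hkm : k.+1 <= m by lia.
move=> t ht; split; last by move=> ->; case: hrho => _ hrefl _ _ _; apply: hrefl.
move=> rts.
have hrho' := hrho.
case: hrho' => hOR hrefl hsym htr hcomp.
have rst := hsym _ _ rts.
have ds : #|dom s| = rk s by [].
have dst : dom s \subset dom t.
  apply/subsetP => x xs; apply/negPn/negP => xt; apply: (L1 hrho h0 hkm hs rst xs xt (theta_neq x)).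
  apply: cardD1_ge; lia.
have edom : dom s = dom t.
  apply/eqP; rewrite eqEsubset dst /=; apply/subsetP => x xt; apply/negPn/negP => xs.
  have pr : dom s \proper dom t by apply/properP; split => //; exists x.
  have := proper_card pr => ltc.
  apply: (L1 hrho h0 hkm ht rts xt xs (theta_neq x)).
  apply: cardD1_ge; lia.
have is_ : #|img s| = rk s by apply: card_img; case: hs.
have it_ : #|img t| = rk t by apply: card_img; case: ht.
have ist : img s \subset img t.
  apply/subsetP => x xs; apply/negPn/negP => xt; apply: (L2 hrho h0 hkm hs rst xs xt (theta_neq x)).
  apply: cardD1_ge; lia.
have eimg : img s = img t.
  apply/eqP; rewrite eqEsubset ist /=; apply/subsetP => x xt; apply/negPn/negP => xs.
  have pr : img s \proper img t by apply/properP; split => //; exists x.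
  have := proper_card pr => ltc.
  apply: (L2 hrho h0 hkm ht rts xt xs (theta_neq x)).
  apply: cardD1_ge; lia.
apply/ffunP => x.
case sx: (s x) => [y|]; case tx: (t x) => [y'|] //.
- case: (eqVneq y' y) => [->//|ny].
  have : y \in img t by rewrite -eimg inE; apply/existsP; exists x; rewrite sx.
  rewrite inE => /existsP [x'' /eqP tx''].
  have nx : x'' != x by apply: contra_neq ny => e; move: tx; rewrite -e tx'' => -[].
  have xs : x \in dom s by rewrite inE sx.
  have hkD : k.+1 <= #|dom s :\ x''| by apply: cardD1_ge; lia.
  have [A [Ad zA xA cA dA]] := pickA (proj1 (OR_adm hs)) xs nx hkD hkm.
  have eA : inOR (pid A) by apply: pid_OR dA _; rewrite cA.
  have [r _] := hcomp _ _ _ eA rst.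
  have [hu _] := hOR _ _ r.
  have cu : #|img (pmul (pid A) s)| = k.+1.
    rewrite card_img; last exact: (proj1 hu).
    rewrite /rk (dom_pmul_l A s) (setIidPl Ad) //.
  have [z zn] : exists z, z \notin img (pmul (pid A) s).
    have := cardsC (img (pmul (pid A) s)); rewrite cu card_ord => hc.
    have : 0 < #|~: img (pmul (pid A) s)| by move: hc; have e := addnn m; lia.
    rewrite card_gt0 => /set0Pn [z]; rewrite inE => zn; by exists z.
  exfalso; apply: (@L2 m rho k hrho h0 hkm _ _ y z hu r).
  + rewrite inE; apply/existsP; exists x; by rewrite !ffunE xA sx.
  + rewrite inE; apply/existsP => -[i]; rewrite !ffunE; case: ifP => // iA.
    move=> /eqP ti; have ei := proj1 ht _ _ _ ti tx''; move: zA; by rewrite -ei iA.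
  + by apply: contraNneq zn => ->; rewrite inE; apply/existsP; exists x; rewrite !ffunE xA sx.
  + rewrite -cu (cardsD1 z (img (pmul (pid A) s))) (negbTE zn) //.
- have : x \in dom t by rewrite -edom inE sx.
  by rewrite inE tx.
- have : x \in dom s by rewrite edom inE tx.
  by rewrite inE sx.
Qed.
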